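(* Let $A\in\mathbb{R}^{m\times n}$ have no zero row, with rows $a_1^T,\dots,a_m^T$, let ${\bf u}=(\mu_1,\dots,\mu_m)\in\mathbb{R}^m$, let $P_k(\mu_k)=I-\mu_k a_ka_k^T/\|a_k\|_2^2$, $Q_i({\bf u}_i)=P_m(\mu_m)\cdots P_{i+1}(\mu_{i+1})$ for $1\le i\le m-1$ and $Q_m({\bf u}_m)=I$. Let $h_{k,l}=a_k^Ta_l/\|a_l\|_2^2$. For $1\le i<j\le m$ define $$d_{i,j}({\bf u}_i)=\sum_{v=2}^{j-i+1}(-1)^{v-1}\sum_{i=t_1<t_2<\dots<t_v=j}\ \prod_{s=1}^{v-1}\mu_{t_{s+1}}\prod_{s=1}^{v-1}h_{t_s,t_{s+1}},$$ where the inner sum is over all strictly increasing integer sequences $t_1<\dots<t_v$ with $t_1=i$, $t_v=j$. Then for every $1\le i\le m$ and every $\tilde x\in N(A)^\perp$, $$a_i^T[Q_i({\bf u}_i)]^T\tilde x=\big(1,d_{i,i+1}({\bf u}_i),\dots,d_{i,m}({\bf u}_i)\big)\big(a_i^T,a_{i+1}^T,\dots,a_m^T\big)^T\tilde x,$$ and the compatible vector of $Q_i({\bf u}_i)a_i$ on $A$ is $(0,\dots,0,1,d_{i,i+1}({\bf u}_i),\dots,d_{i,m}({\bf u}_i))$ (with the $1$ in position $i$), i.e. $Q_i({\bf u}_i)a_i=a_i+\sum_{j=i+1}^m d_{i,j}({\bf u}_i)a_j$.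
   Context: ${\bf u}_i=(\mu_{i+1},\dots,\mu_m)$. $N(A)^\perp$ is the orthogonal complement of the null space of $A$. *)

(* Defs.v *)
(* Indices are 0-based: paper index k in 1..m is 'I_m element k-1. *)
From HB Require Import structures.
From mathcomp Require Import all_boot all_order all_algebra.
Set Implicit Arguments. Unset Strict Implicit. Unset Printing Implicit Defensive.
Import Order.TTheory GRing.Theory Num.Theory.
Local Open Scope ring_scope.

Section Defs.
Variables (R : realFieldType) (m n : nat) (A : 'M[R]_(m, n)).

Definition acol (k : 'I_m) : 'cV[R]_n := (row k A)^T.

Definition nrm2 (k : 'I_m) : R := \sum_(j < n) A k j ^+ 2.

Definition Pk (k : 'I_m) (mu : R) : 'M[R]_n :=
  1%:M - (mu / nrm2 k) *: (acol k *m (acol k)^T).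

Definition Qi (u : 'rV[R]_m) (i : 'I_m) : 'M[R]_n :=
  foldr (fun k M => M *m Pk k (u 0 k)) 1%:M [seq k : 'I_m <- enum 'I_m | (i < k)%N].

Definition hkl (k l : 'I_m) : R := (\sum_(j < n) A k j * A l j) / nrm2 l.

Definition dij (u : 'rV[R]_m) (i j : 'I_m) : R :=
  \sum_(2 <= v < (j - i).+2)
    (-1) ^+ (v - 1) *
    \sum_(t : v.-tuple 'I_m |
           [&& sorted (fun x y : 'I_m => (x < y)%N) t,
               head i t == i & last i t == j])
      ((\prod_(s < v.-1) u 0 (nth i t s.+1)) *
       (\prod_(s < v.-1) hkl (nth i t s) (nth i t s.+1))).

Definition in_null_perp (x : 'cV[R]_n) : Prop :=
  forall y : 'cV[R]_n, A *m y = 0 -> x^T *m y = 0.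

Definition compat_vec (u : 'rV[R]_m) (i : 'I_m) : 'rV[R]_m :=
  \row_(j < m) (if j == i then 1 else if (i < j)%N then dij u i j else 0).

End Defs.

(* Main.v *)
Require Import Defs.
From HB Require Import structures.
From mathcomp Require Import all_boot all_order all_algebra.
From mathcomp Require Import zify ring.
Import Order.TTheory GRing.Theory Num.Theory.
Local Open Scope ring_scope.

Section L.
Variables (R : realFieldType) (m n : nat) (A : 'M[R]_(m, n)) (u : 'rV[R]_m).

Fixpoint wt (s : seq 'I_m) : R :=
  if s is x :: s' then (if s' is y :: _ then u 0 y * hkl A x y * wt s' else 1) else 1.

Lemma wtE v (z : 'I_m) (t : seq 'I_m) : size t = v ->
  (\prod_(s < v.-1) u 0 (nth z t s.+1)) *
  (\prod_(s < v.-1) hkl A (nth z t s) (nth z t s.+1)) = wt t.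
Proof.
elim: t v z => [|x t IH] v z <-; first by rewrite /= !big_ord0 mulr1.
case: t IH => [|y t] IH /=; first by rewrite !big_ord0 mulr1.
rewrite !big_ord_recl /=.
have -> : \prod_(i < size t) u 0 (nth z [:: x, y & t] (lift ord0 i).+1)
   = \prod_(i < (size t).+1.-1) u 0 (nth z (y :: t) i.+1).
  by apply: eq_bigr => s _; rewrite lift0.
have -> : \prod_(i < size t) hkl A (nth z [:: x, y & t] (lift ord0 i)) (nth z [:: x, y & t] (lift ord0 i).+1)
   = \prod_(i < (size t).+1.-1) hkl A (nth z (y :: t) i) (nth z (y :: t) i.+1).
  by apply: eq_bigr => s _; rewrite lift0.
have := IH (size t).+1 z erefl. move=> H; rewrite [in RHS]/wt -/(wt (y :: t)) -H. ring.
Qed.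

Definition cnd (i j : 'I_m) (t : seq 'I_m) : bool :=
  [&& sorted (fun x y : 'I_m => (x < y)%N) t, head i t == i & last i t == j].

Definition T v i j := \sum_(t : v.-tuple 'I_m | cnd i j t) wt t.

Lemma T_cons v i j : T v.+1 i j = \sum_(t : v.-tuple 'I_m | cnd i j (i :: t)) wt (i :: t).
Proof.
rewrite /T (reindex_onto (fun t : v.-tuple 'I_m => cons_tuple i t) (fun t => behead_tuple t)) /=.
  apply: eq_bigl => t.
  have -> : behead_tuple (cons_tuple i t) = t by apply: val_inj.
  by rewrite eqxx andbT.
move=> t /and3P [_ /eqP hd _]; apply: val_inj => /=.
by case: t hd => [[|x s] //= _] ->.
Qed.

Lemma T0 i j : T 1 i j = (i == j)%:R.
Proof.
rewrite T_cons big_mkcond (big_pred1 [tuple]) /=; last first.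
  by move=> t; apply/esym/eqP/tuple0.
rewrite /cnd /= eqxx /=; by case: (i == j).
Qed.

Lemma T_step v i j : T v.+2 i j = \sum_(k : 'I_m | (i < k)%N) u 0 k * hkl A i k * T v.+1 k j.
Proof.
rewrite T_cons (partition_big (fun t : v.+1.-tuple 'I_m => head i t) (fun k : 'I_m => (i < k)%N)).
  apply: eq_bigr => k ik; rewrite /T big_distrr /=.
  apply: eq_big => t.
    case: t => [[|y s] //= _]; rewrite /cnd /= eqxx /=.
    case: (y =P k) => [->|ne]; first by rewrite ik /= andbT.
    by rewrite !andbF.
  move=> /andP[_ /eqP hk]; case: t hk => [[|y s] //= _] ->.
  by [].
by move=> t; case: t => [[|y s] //= _] /and3P[/andP[]].
Qed.

Lemma T_vanish v (k j : 'I_m) : (j < k + v)%N -> T v.+1 k j = 0.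
Proof.
elim: v k => [|v IH] k hj.
  rewrite T0; case: eqP => // e; subst; by rewrite addn0 ltnn in hj.
rewrite T_step big1 // => l kl; rewrite IH ?mulr0 //; lia.
Qed.

Definition G i j := \sum_(0 <= v < m) (-1) ^+ v * T v.+1 i j.

Lemma sum_last (N : nat) (F : nat -> R) : (0 < N)%N ->
  \sum_(0 <= v < N) F v = \sum_(0 <= v < N.-1) F v + F N.-1.
Proof. by case: N => // N _; rewrite big_nat_recr. Qed.

Lemma m_gt0 (i : 'I_m) : (0 < m)%N.
Proof. by apply: leq_ltn_trans (ltn_ord i). Qed.

Lemma G_rec i j : G i j = (i == j)%:R - \sum_(k : 'I_m | (i < k)%N) u 0 k * hkl A i k * G k j.
Proof.
have hm := m_gt0 i.
rewrite /G big_ltn // expr0 mul1r T0 big_add1 /=; congr (_ + _).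
under eq_bigr do rewrite T_step big_distrr /=.
rewrite exchange_big /= -sumrN; apply: eq_bigr => k ik.
rewrite (@sum_last m _ hm) T_vanish; last by have := ltn_ord j; lia.
rewrite mulr0 addr0 big_distrr -sumrN; apply: eq_bigr => v _.
rewrite exprS /=; ring.
Qed.

Lemma G_lt (i j : 'I_m) : (j < i)%N -> G i j = 0.
Proof. by move=> h; rewrite /G big1 // => v _; rewrite T_vanish ?mulr0 //; lia. Qed.

Lemma G_eq i : G i i = 1.
Proof.
rewrite /G big_ltn ?(m_gt0 i) // expr0 mul1r T0 eqxx big_add1 big1 ?addr0 // => v _.
by rewrite T_vanish ?mulr0 //; lia.
Qed.

Lemma G_d (i j : 'I_m) : (i < j)%N -> G i j = dij A u i j.
Proof.
move=> ij.
have hm := m_gt0 i.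
have -> : dij A u i j = \sum_(2 <= v < (j - i).+2) (-1) ^+ (v - 1) * T v i j.
  apply: eq_bigr => v _; congr (_ * _); apply: eq_bigr => t _.
  by rewrite (@wtE _ i _ (size_tuple t)).
rewrite big_add1 big_add1 /=.
rewrite /G [LHS]big_ltn // T0 (negbTE (_ : i != j)); last first.
  by apply/eqP => e; subst; rewrite ltnn in ij.
rewrite mulr0 add0r big_add1 /=.
rewrite (@big_cat_nat _ _ _ (j - i)) //=; last by have := ltn_ord j; lia.
rewrite [X in _ + X]big_nat_cond [X in _ + X]big1 ?addr0; last first.
  move=> v /andP[/andP[hv _] _]; rewrite T_vanish ?mulr0 //; lia.
apply: eq_bigr => v _; by rewrite subn1.
Qed.

Definition gk k (b : 'cV[R]_n) : R := ((acol A k)^T *m b) 0 0 / nrm2 A k.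

Lemma Pk_mul k mu b : Pk A k mu *m b = b - (mu * gk k b) *: acol A k.
Proof.
rewrite /Pk mulmxBl mul1mx -scalemxAl -mulmxA [(acol A k)^T *m b]mx11_scalar.
rewrite mul_mx_scalar scalerA /gk; congr (_ - _ *: _); ring.
Qed.

Lemma filter_gt (i : 'I_m) :
  map (@nat_of_ord m) [seq k : 'I_m <- enum 'I_m | (i < k)%N] = iota i.+1 (m - i.+1).
Proof.
rewrite -(@filter_map _ _ (@nat_of_ord m) (fun x : nat => (i < x)%N) (enum 'I_m)) val_enum_ord.
have -> : iota 0 m = iota 0 i.+1 ++ iota i.+1 (m - i.+1).
  by rewrite -iotaD subnKC.
rewrite filter_cat (@eq_in_filter _ _ pred0); last first.
  by move=> x; rewrite mem_iota /= => h; apply/negbTE; rewrite -leqNgt -ltnS.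
rewrite filter_pred0 /= (@eq_in_filter _ _ predT) ?filter_predT //.
by move=> x; rewrite mem_iota /= => /andP[h _].
Qed.

Lemma Qi_last (i : 'I_m) : i.+1 = m -> Qi A u i = 1%:M.
Proof.
move=> h; rewrite /Qi.
set s := filter _ _.
have : size (map (@nat_of_ord m) s) = 0%N.
  by rewrite /s filter_gt size_iota h subnn.
by rewrite size_map; case: s.
Qed.

Lemma Qi_step (i : 'I_m) (h : (i.+1 < m)%N) :
  Qi A u i = Qi A u (Ordinal h) *m Pk A (Ordinal h) (u 0 (Ordinal h)).
Proof.
rewrite /Qi.
have -> : [seq k : 'I_m <- enum 'I_m | (i < k)%N] = Ordinal h :: [seq k : 'I_m <- enum 'I_m | (Ordinal h < k)%N].
  apply: (inj_map (@ord_inj m)); rewrite map_cons filter_gt (filter_gt (Ordinal h)) /=.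
  have -> : (m - i.+1 = (m - i.+2).+1)%N by lia.
  by [].
by [].
Qed.

Lemma QB (i : 'I_m) b : Qi A u i *m b =
  b - \sum_(k < m | (i < k)%N) (u 0 k * gk k b) *: (Qi A u k *m acol A k).
Proof.
suff: forall d (i : 'I_m), (m - i.+1)%N = d -> Qi A u i *m b =
  b - \sum_(k < m | (i < k)%N) (u 0 k * gk k b) *: (Qi A u k *m acol A k) by apply.
elim=> [|d IH] {}i hd.
  have hi : i.+1 = m by have := ltn_ord i; lia.
  rewrite Qi_last // mul1mx big_pred0 ?subr0 // => k.
  apply/negbTE; rewrite -leqNgt; have := ltn_ord k; lia.
have h : (i.+1 < m)%N by lia.
rewrite Qi_step -mulmxA Pk_mul mulmxBr IH /=; last by lia.
rewrite -scalemxAr [in RHS](bigD1 (Ordinal h)) //=.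
have -> : \sum_(k < m | (i < k)%N && (k != Ordinal h)) (u 0 k * gk k b) *: (Qi A u k *m acol A k)
  = \sum_(k < m | (i.+1 < k)%N) (u 0 k * gk k b) *: (Qi A u k *m acol A k).
  apply: eq_bigl => k; rewrite -val_eqE /=.
  by apply/idP/idP => [/andP[h1 h2]|h1]; [move/eqP: h2 => h2; lia | apply/andP; split; [lia | apply/eqP; lia]].
by rewrite opprD addrA addrAC.
Qed.

Lemma gk_acol i k : gk k (acol A i) = hkl A i k.
Proof.
rewrite /gk /hkl mxE; congr (_ / _); apply: eq_bigr => j _.
by rewrite /acol trmxK !mxE mulrC.
Qed.

Lemma Qa i : Qi A u i *m acol A i = \sum_(j < m) G i j *: acol A j.
Proof.
suff: forall d (i : 'I_m), (m - i <= d)%N ->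
  Qi A u i *m acol A i = \sum_(j < m) G i j *: acol A j by apply; apply: leqnn.
elim=> [|d IH] {}i hd.
  by have := ltn_ord i; lia.
rewrite QB.
under eq_bigr => k ik.
  rewrite gk_acol (IH k); last by lia.
  over.
under [RHS]eq_bigr do rewrite G_rec scalerBl.
rewrite sumrB; congr (_ - _).
  rewrite (bigD1 i) //= eqxx scale1r big1 ?addr0 // => j ji.
  by rewrite eq_sym (negbTE ji) scale0r.
under [RHS]eq_bigr do rewrite scaler_suml.
rewrite exchange_big /=; apply: eq_bigr => k _.
rewrite scaler_sumr; apply: eq_bigr => j _; by rewrite scalerA.
Qed.

Lemma compatG i j : compat_vec A u i 0 j = G i j.
Proof.
rewrite mxE; case: eqP => [->|ne]; first by rewrite G_eq.
case: ltnP => h; first by rewrite G_d.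
rewrite G_lt //.
have : (j : nat) <> i by move=> e; apply: ne; apply: val_inj.
lia.
Qed.

Lemma AtcE (c : 'rV[R]_m) : A^T *m c^T = \sum_(j < m) c 0 j *: acol A j.
Proof.
apply/matrixP => r s; rewrite (ord1 s) !mxE summxE; apply: eq_bigr => j _.
by rewrite !mxE mulrC.
Qed.

Lemma part3 i : Qi A u i *m acol A i = acol A i + \sum_(j < m | (i < j)%N) dij A u i j *: acol A j.
Proof.
rewrite Qa (bigD1 i) //= G_eq scale1r; congr (_ + _).
rewrite (bigID (fun j : 'I_m => (i < j)%N)) /= [X in _ + X]big1 ?addr0; last first.
  move=> j /andP[ji hj]; rewrite G_lt ?scale0r //.
  have : (j : nat) <> i by move=> e; move/eqP: ji; apply; apply: val_inj.
  move: hj; rewrite -leqNgt; lia.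
apply: eq_big => j.
  case: (ltnP i j) => h; rewrite ?andbT ?andbF //.
  by apply/eqP => e; subst; rewrite ltnn in h.
by move=> /andP[_ h]; rewrite G_d.
Qed.

End L.

Theorem lemma3p7 (R : realFieldType) (m n : nat) (A : 'M[R]_(m, n))
  (hA : forall k : 'I_m, row k A != 0) (u : 'rV[R]_m) (i : 'I_m) :
  (forall x : 'cV[R]_n, in_null_perp A x ->
     (row i A) *m (Qi A u i)^T *m x =
     row i A *m x + \sum_(j < m | (i < j)%N) dij A u i j *: (row j A *m x))
  /\ Qi A u i *m acol A i = A^T *m (compat_vec A u i)^T
  /\ Qi A u i *m acol A i = acol A i + \sum_(j < m | (i < j)%N) dij A u i j *: acol A j.
Proof.
split; last split; last exact: part3.
  move=> x _.
  have -> : row i A *m (Qi A u i)^T = (Qi A u i *m acol A i)^T by rewrite trmx_mul /acol trmxK.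
  rewrite part3 linearD linear_sum /= mulmxDl mulmx_suml /acol trmxK; congr (_ + _).
  by apply: eq_bigr => j _; rewrite linearZ /= trmxK -scalemxAl.
rewrite AtcE Qa; apply: eq_bigr => j _; by rewrite compatG.
Qed.
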